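(* Let $\pi$ be a $k$-simple $\mathbf{LKI}_{\mathcal E}$-proof of a sequent $S$. Then there exists a proof schema with end-sequent $S$.
   Context: **Language.** A two-sorted first-order language with sort $\omega$ (natural numbers) and sort $\iota$. It contains the constant function symbols $0:\omega$ and $s:\omega\to\omega$ (we write $t+1$ for $s(t)$), further uninterpreted (''constant'') function and predicate symbols, and defined function and predicate symbols. Each defined function symbol $f:\omega\times\tau_1\times\cdots\times\tau_n\to\tau$ comes with two rewrite rules $f(0,\bar x)\to s$ and $f(s(y),\bar x)\to t[f(y,\bar x)]$, where: - $s$ and $t$ do not contain $f$; - $\mathrm{vars}(s)\subseteq\{\bar x\}$ and $\mathrm{vars}(t)\subseteq\{\bar x,y\}$; - every defined symbol $g$ occurring in $s$ or $t$ satisfies $g\prec f$ for a fixed irreflexive order $\prec$ (primitive recursion). Defined predicate symbols are analogous, with formulas as right-hand sides. $\mathcal E$ denotes these rewrite rules read as equations. **Calculi.** $\mathbf{LK}_{\mathcal E}$ is Gentzen's $\mathbf{LK}$ (sequents are pairs of multisets; axioms $A\vdash A$ with $A$ atomic) extended by the rule: from $S[t]$ infer $S[t']$ whenever $\mathcal E\models t=t'$. For a proof symbol $\varphi$, terms $a_1,\dots,a_m$ and a sequent $S(x_1,\dots,x_m)$, a proof link is $(\varphi(a_1,\dots,a_m))$ written above $S(a_1,\dots,a_m)$. It is a $k$-proof link (for a variable $k:\omega$) if $\mathrm{vars}(a_1)\subseteq\{k\}$. $\mathbf{LKS}_{\mathcal E}$ is $\mathbf{LK}_{\mathcal E}$ in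 which proof links may occur as leaves. **Proof schemata.** A proof schema pair for a proof symbol $\psi$ with sequent $S(n,x_1,\dots,x_m)$ (where $n:\omega$) is a pair $(\pi,\nu(k))$ of $\mathbf{LKS}_{\mathcal E}$-proofs of $S(0,\bar x)$ and $S(k+1,\bar x)$ respectively, such that: - $\pi$ contains no proof links; - $\nu(k)$ contains only proof links of the form $(\psi(k,a_1,\dots,a_m))$ above $S(k,a_1,\dots,a_m)$. A proof schema $\Psi=\langle(\pi_1,\nu_1(k)),\dots,(\pi_\alpha,\nu_\alpha(k))\rangle$ is a tuple of proof schema pairs for proof symbols $\psi_1,\dots,\psi_\alpha$, such that the proofs of the $\beta$-th pair may additionally contain $k$-proof links to $\psi_\gamma$ for $\beta<\gamma$. Its end-sequent is the sequent $S(n,\bar x)$ of $\psi_1$. **Induction.** $\mathbf{LKI}_{\mathcal E}$ is $\mathbf{LK}_{\mathcal E}$ (without proof links) extended by the induction rule: from $A(k),\Gamma\vdash\Delta,A(k+1)$ infer $A(0),\Gamma\vdash\Delta,A(t)$, where $k:\omega$ is a variable not occurring in $\Gamma,\Delta,A(0)$ and $t$ is a term of sort $\omega$. An $\mathbf{LKI}_{\mathcal E}$-proof is $k$-simple if in all its induction inferences the eigenvariable is $k$ and $\mathrm{vars}(t)\subseteq\{k\}$. *)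

(* Defs.v *)
From Stdlib Require Import List Permutation Arith Bool.
Import ListNotations.

Set Implicit Arguments.

(** [SO] is the sort omega (natural numbers), [SI] is the sort iota. *)
Inductive sort := SO | SI.

Definition sort_eqb (s1 s2 : sort) : bool :=
  match s1, s2 with SO, SO | SI, SI => true | _, _ => false end.

Definition var := (sort * nat)%type.

Definition var_eqb (v w : var) : bool :=
  sort_eqb (fst v) (fst w) && Nat.eqb (snd v) (snd w).

(** The symbols [0 : omega] and [s : omega -> omega] are built into the
    term syntax. *)
Record signature := {
  fsym : Type;
  fargs : fsym -> list sort;
  fres : fsym -> sort;
  psym : Type;
  pargs : psym -> list sort
}.
Arguments fargs {_} _.
Arguments fres {_} _.
Arguments pargs {_} _.

Section Syntax.
Context {Sg : signature}.

(** Terms, in locally nameless style: free variables are named,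
    bound variables are de Bruijn indices. *)
Inductive term :=
| TFree (v : var)
| TBound (i : nat)
| TZero
| TSucc (t : term)
| TApp (f : fsym Sg) (l : list term).

Inductive formula :=
| FAtom (p : psym Sg) (l : list term)
| FNeg (A : formula)
| FAnd (A B : formula)
| FOr (A B : formula)
| FImp (A B : formula)
| FAll (s : sort) (A : formula)   (* body: bound index 0 has sort s *)
| FEx (s : sort) (A : formula).

Definition is_atom (A : formula) : Prop := exists p l, A = FAtom p l.

(** Well-sortedness; [G] gives the sorts of the bound indices. *)
Fixpoint wf_term (G : list sort) (t : term) (s : sort) {struct t} : Prop :=
  match t with
  | TFree v => fst v = s
  | TBound i => nth_error G i = Some s
  | TZero => s = SO
  | TSucc u => s = SO /\ wf_term G u SO
  | TApp f l =>
      s = fres f /\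
      (fix go (l : list term) (ss : list sort) : Prop :=
         match l, ss with
         | [], [] => True
         | u :: l', s' :: ss' => wf_term G u s' /\ go l' ss'
         | _, _ => False
         end) l (fargs f)
  end.

Fixpoint wf_terms (G : list sort) (l : list term) (ss : list sort) : Prop :=
  match l, ss with
  | [], [] => True
  | u :: l', s' :: ss' => wf_term G u s' /\ wf_terms G l' ss'
  | _, _ => False
  end.

Fixpoint wf_form (G : list sort) (A : formula) : Prop :=
  match A with
  | FAtom p l => wf_terms G l (pargs p)
  | FNeg B => wf_form G B
  | FAnd B C | FOr B C | FImp B C => wf_form G B /\ wf_form G C
  | FAll s B | FEx s B => wf_form (s :: G) B
  end.

Fixpoint fv_term (t : term) : list var :=
  match t with
  | TFree v => [v]
  | TBound _ | TZero => []
  | TSucc u => fv_term u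
  | TApp _ l => flat_map fv_term l
  end.

Fixpoint fv_form (A : formula) : list var :=
  match A with
  | FAtom _ l => flat_map fv_term l
  | FNeg B => fv_form B
  | FAnd B C | FOr B C | FImp B C => fv_form B ++ fv_form C
  | FAll _ B | FEx _ B => fv_form B
  end.

(** Substitution of terms for free variables (the substituted terms are
    always locally closed where it is used, so no capture can occur). *)
Fixpoint subst_term (sg : var -> term) (t : term) : term :=
  match t with
  | TFree v => sg v
  | TBound i => TBound i
  | TZero => TZero
  | TSucc u => TSucc (subst_term sg u)
  | TApp f l => TApp f (map (subst_term sg) l)
  end.

Fixpoint subst_form (sg : var -> term) (A : formula) : formula :=
  match A with
  | FAtom p l => FAtom p (map (subst_term sg) l)
  | FNeg B => FNeg (subst_form sg B)
  | FAnd B C => FAnd (subst_form sg B) (subst_form sg C)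
  | FOr B C => FOr (subst_form sg B) (subst_form sg C)
  | FImp B C => FImp (subst_form sg B) (subst_form sg C)
  | FAll s B => FAll s (subst_form sg B)
  | FEx s B => FEx s (subst_form sg B)
  end.

Definition sub1 (x : var) (u : term) : var -> term :=
  fun v => if var_eqb v x then u else TFree v.

Fixpoint open_term (d : nat) (u : term) (t : term) : term :=
  match t with
  | TFree v => TFree v
  | TBound i => if Nat.eqb i d then u else TBound i
  | TZero => TZero
  | TSucc w => TSucc (open_term d u w)
  | TApp f l => TApp f (map (open_term d u) l)
  end.

Fixpoint open_form (d : nat) (u : term) (A : formula) : formula :=
  match A with
  | FAtom p l => FAtom p (map (open_term d u) l)
  | FNeg B => FNeg (open_form d u B)
  | FAnd B C => FAnd (open_form d u B) (open_form d u C)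
  | FOr B C => FOr (open_form d u B) (open_form d u C)
  | FImp B C => FImp (open_form d u B) (open_form d u C)
  | FAll s B => FAll s (open_form (S d) u B)
  | FEx s B => FEx s (open_form (S d) u B)
  end.

Definition inst (A : formula) (u : term) : formula := open_form 0 u A.

Definition dsym := (fsym Sg + psym Sg)%type.

(** Rule data of a defined function symbol [f]:
       f(0, xs)      -> fr_base
       f(s(y), xs)   -> fr_step
    where [fr_step] is the term t[f(y,xs)], i.e. it may contain [f] only in
    the subterms f(y, xs) (the holes of the context t). *)
Record frule := { fr_xs : list var; fr_y : var; fr_base : term; fr_step : term }.

Record prule := { pr_xs : list var; pr_y : var;
                  pr_base : formula; pr_step : formula }.

Fixpoint term_ok (good : fsym Sg -> Prop) (hole : term -> Prop) (t : term)
  : Prop :=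
  hole t \/
  match t with
  | TFree _ | TBound _ | TZero => True
  | TSucc u => term_ok good hole u
  | TApp g l =>
      good g /\
      (fix go (l : list term) : Prop :=
         match l with [] => True | u :: l' => term_ok good hole u /\ go l' end) l
  end.

Fixpoint form_ok (goodf : fsym Sg -> Prop) (goodp : psym Sg -> Prop)
  (hole : formula -> Prop) (A : formula) : Prop :=
  hole A \/
  match A with
  | FAtom q l => goodp q /\ Forall (term_ok goodf (fun _ => False)) l
  | FNeg B => form_ok goodf goodp hole B
  | FAnd B C | FOr B C | FImp B C =>
      form_ok goodf goodp hole B /\ form_ok goodf goodp hole C
  | FAll _ B | FEx _ B => form_ok goodf goodp hole B
  end.

Record pr_system := {
  fdef : fsym Sg -> Prop;
  pdef : psym Sg -> Prop;
  prec : dsym -> dsym -> Prop;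
  frules : fsym Sg -> frule;
  prules : psym Sg -> prule
}.

Definition f_lhs0 (f : fsym Sg) (r : frule) : term :=
  TApp f (TZero :: map TFree (fr_xs r)).
Definition f_lhsS (f : fsym Sg) (r : frule) : term :=
  TApp f (TSucc (TFree (fr_y r)) :: map TFree (fr_xs r)).
Definition p_lhs0 (p : psym Sg) (r : prule) : formula :=
  FAtom p (TZero :: map TFree (pr_xs r)).
Definition p_lhsS (p : psym Sg) (r : prule) : formula :=
  FAtom p (TSucc (TFree (pr_y r)) :: map TFree (pr_xs r)).

Definition frule_ok (E : pr_system) (f : fsym Sg) : Prop :=
  let r := frules E f in
  let good := fun g => fdef E g -> prec E (inl g) (inl f) in
  fargs f = SO :: map fst (fr_xs r) /\ fst (fr_y r) = SO /\
  NoDup (fr_y r :: fr_xs r) /\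
  wf_term [] (fr_base r) (fres f) /\ wf_term [] (fr_step r) (fres f) /\
  (forall v, In v (fv_term (fr_base r)) -> In v (fr_xs r)) /\
  (forall v, In v (fv_term (fr_step r)) -> In v (fr_y r :: fr_xs r)) /\
  term_ok good (fun _ => False) (fr_base r) /\
  term_ok good (fun u => u = TApp f (TFree (fr_y r) :: map TFree (fr_xs r)))
          (fr_step r).

Definition prule_ok (E : pr_system) (p : psym Sg) : Prop :=
  let r := prules E p in
  let goodf := fun g => fdef E g -> prec E (inl g) (inr p) in
  let goodp := fun q => pdef E q -> prec E (inr q) (inr p) in
  pargs p = SO :: map fst (pr_xs r) /\ fst (pr_y r) = SO /\
  NoDup (pr_y r :: pr_xs r) /\
  wf_form [] (pr_base r) /\ wf_form [] (pr_step r) /\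
  (forall v, In v (fv_form (pr_base r)) -> In v (pr_xs r)) /\
  (forall v, In v (fv_form (pr_step r)) -> In v (pr_y r :: pr_xs r)) /\
  form_ok goodf goodp (fun _ => False) (pr_base r) /\
  form_ok goodf goodp
    (fun B => B = FAtom p (TFree (pr_y r) :: map TFree (pr_xs r)))
    (pr_step r).

Definition pr_system_ok (E : pr_system) : Prop :=
  (forall a, ~ prec E a a) /\
  (forall a b c, prec E a b -> prec E b c -> prec E a c) /\
  (forall f, fdef E f -> frule_ok E f) /\
  (forall p, pdef E p -> prule_ok E p).

Record structure := {
  U : Type;
  dom : sort -> U -> Prop;
  dom_ne : forall s, exists u, dom s u;
  i0 : U;
  isucc : U -> U;
  ifun : fsym Sg -> list U -> U;
  ipred : psym Sg -> list U -> Prop;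
  i0_dom : dom SO i0;
  isucc_dom : forall u, dom SO u -> dom SO (isucc u);
  ifun_dom : forall f us, Forall2 dom (fargs f) us -> dom (fres f) (ifun f us)
}.

Fixpoint eval (M : structure) (rho : var -> U M) (be : list (U M)) (t : term)
  : U M :=
  match t with
  | TFree v => rho v
  | TBound i => nth i be (i0 M)
  | TZero => i0 M
  | TSucc u => isucc M (eval M rho be u)
  | TApp f l => ifun M f (map (eval M rho be) l)
  end.

Fixpoint holds (M : structure) (rho : var -> U M) (be : list (U M))
  (A : formula) : Prop :=
  match A with
  | FAtom p l => ipred M p (map (eval M rho be) l)
  | FNeg B => ~ holds M rho be B
  | FAnd B C => holds M rho be B /\ holds M rho be C
  | FOr B C => holds M rho be B \/ holds M rho be C
  | FImp B C => holds M rho be B -> holds M rho be C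
  | FAll s B => forall u, dom M s u -> holds M rho (u :: be) B
  | FEx s B => exists u, dom M s u /\ holds M rho (u :: be) B
  end.

Definition sorted_asg (M : structure) (rho : var -> U M) : Prop :=
  forall v, dom M (fst v) (rho v).

Definition is_model (E : pr_system) (M : structure) : Prop :=
  (forall f, fdef E f -> forall rho, sorted_asg M rho ->
     eval M rho [] (f_lhs0 f (frules E f)) = eval M rho [] (fr_base (frules E f)) /\
     eval M rho [] (f_lhsS f (frules E f)) = eval M rho [] (fr_step (frules E f))) /\
  (forall p, pdef E p -> forall rho, sorted_asg M rho ->
     (holds M rho [] (p_lhs0 p (prules E p)) <-> holds M rho [] (pr_base (prules E p))) /\
     (holds M rho [] (p_lhsS p (prules E p)) <-> holds M rho [] (pr_step (prules E p)))).

(** E |= t = t' for terms of sort [s], in a context [G] of bound variables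
    (which are treated like free, universally quantified variables). *)
Definition E_eq_term (E : pr_system) (G : list sort) (t t' : term) (s : sort)
  : Prop :=
  wf_term G t s /\ wf_term G t' s /\
  forall M, is_model E M -> forall rho, sorted_asg M rho ->
  forall be, Forall2 (dom M) G be -> eval M rho be t = eval M rho be t'.

Definition E_eq_form (E : pr_system) (G : list sort) (A A' : formula) : Prop :=
  wf_form G A /\ wf_form G A' /\
  forall M, is_model E M -> forall rho, sorted_asg M rho ->
  forall be, Forall2 (dom M) G be -> (holds M rho be A <-> holds M rho be A').

Fixpoint repl_term (E : pr_system) (G : list sort) (u u' : term) {struct u}
  : Prop :=
  u = u' \/ (exists s, E_eq_term E G u u' s) \/
  match u, u' with
  | TSucc a, TSucc b => repl_term E G a b
  | TApp f l, TApp g l' =>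
      f = g /\
      (fix go (l l' : list term) : Prop :=
         match l, l' with
         | [], [] => True
         | a :: l1, b :: l1' => repl_term E G a b /\ go l1 l1'
         | _, _ => False
         end) l l'
  | _, _ => False
  end.

Fixpoint repl_terms (E : pr_system) (G : list sort) (l l' : list term) : Prop :=
  match l, l' with
  | [], [] => True
  | a :: l1, b :: l1' => repl_term E G a b /\ repl_terms E G l1 l1'
  | _, _ => False
  end.

Fixpoint repl_form (E : pr_system) (G : list sort) (A A' : formula) : Prop :=
  A = A' \/ E_eq_form E G A A' \/
  match A, A' with
  | FAtom p l, FAtom q l' => p = q /\ repl_terms E G l l'
  | FNeg B, FNeg B' => repl_form E G B B'
  | FAnd B C, FAnd B' C' | FOr B C, FOr B' C' | FImp B C, FImp B' C' =>
      repl_form E G B B' /\ repl_form E G C C'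
  | FAll s B, FAll s' B' | FEx s B, FEx s' B' =>
      s = s' /\ repl_form E (s :: G) B B'
  | _, _ => False
  end.

(** Sequents are pairs of lists, considered up to permutation
    (rule [d_perm]), i.e. pairs of multisets. *)
Definition sequent := (list formula * list formula)%type.

Definition fv_seq (S : sequent) : list var :=
  flat_map fv_form (fst S ++ snd S).

Definition repl_seq (E : pr_system) (S S' : sequent) : Prop :=
  Forall2 (repl_form E []) (fst S) (fst S') /\
  Forall2 (repl_form E []) (snd S) (snd S').

(** Generic derivations: LK_E, plus leaves [L] (proof links) and
    induction inferences whose eigenvariable [k] and term [t] satisfy
    [Ind k t].
    - LKS_E  = [deriv E L NoInd]   (proof links allowed by [L])
    - LKI_E  = [deriv E NoLinks Ind] *)
Inductive deriv (E : pr_system) (L : sequent -> Prop)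
  (Ind : var -> term -> Prop) : sequent -> Prop :=
| d_ax A : is_atom A -> deriv E L Ind ([A], [A])
| d_link S : L S -> deriv E L Ind S
| d_perm G D G' D' :
    deriv E L Ind (G, D) -> Permutation G G' -> Permutation D D' ->
    deriv E L Ind (G', D')
| d_wl A G D : deriv E L Ind (G, D) -> deriv E L Ind (A :: G, D)
| d_wr A G D : deriv E L Ind (G, D) -> deriv E L Ind (G, A :: D)
| d_cl A G D : deriv E L Ind (A :: A :: G, D) -> deriv E L Ind (A :: G, D)
| d_cr A G D : deriv E L Ind (G, A :: A :: D) -> deriv E L Ind (G, A :: D)
| d_cut A G1 D1 G2 D2 :
    deriv E L Ind (G1, A :: D1) -> deriv E L Ind (A :: G2, D2) ->
    deriv E L Ind (G1 ++ G2, D1 ++ D2)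
| d_negl A G D : deriv E L Ind (G, A :: D) -> deriv E L Ind (FNeg A :: G, D)
| d_negr A G D : deriv E L Ind (A :: G, D) -> deriv E L Ind (G, FNeg A :: D)
| d_andl1 A B G D :
    deriv E L Ind (A :: G, D) -> deriv E L Ind (FAnd A B :: G, D)
| d_andl2 A B G D :
    deriv E L Ind (B :: G, D) -> deriv E L Ind (FAnd A B :: G, D)
| d_andr A B G D :
    deriv E L Ind (G, A :: D) -> deriv E L Ind (G, B :: D) ->
    deriv E L Ind (G, FAnd A B :: D)
| d_orl A B G D :
    deriv E L Ind (A :: G, D) -> deriv E L Ind (B :: G, D) ->
    deriv E L Ind (FOr A B :: G, D)
| d_orr1 A B G D :
    deriv E L Ind (G, A :: D) -> deriv E L Ind (G, FOr A B :: D)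
| d_orr2 A B G D :
    deriv E L Ind (G, B :: D) -> deriv E L Ind (G, FOr A B :: D)
| d_impl A B G1 D1 G2 D2 :
    deriv E L Ind (G1, A :: D1) -> deriv E L Ind (B :: G2, D2) ->
    deriv E L Ind (FImp A B :: G1 ++ G2, D1 ++ D2)
| d_impr A B G D :
    deriv E L Ind (A :: G, B :: D) -> deriv E L Ind (G, FImp A B :: D)
| d_alll s A t G D :
    wf_term [] t s ->
    deriv E L Ind (inst A t :: G, D) -> deriv E L Ind (FAll s A :: G, D)
| d_allr s A a G D :
    fst a = s -> ~ In a (fv_seq (G, FAll s A :: D)) ->
    deriv E L Ind (G, inst A (TFree a) :: D) ->
    deriv E L Ind (G, FAll s A :: D)
| d_exl s A a G D :
    fst a = s -> ~ In a (fv_seq (FEx s A :: G, D)) ->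
    deriv E L Ind (inst A (TFree a) :: G, D) ->
    deriv E L Ind (FEx s A :: G, D)
| d_exr s A t G D :
    wf_term [] t s ->
    deriv E L Ind (G, inst A t :: D) -> deriv E L Ind (G, FEx s A :: D)
| d_eq S S' : deriv E L Ind S -> repl_seq E S S' -> deriv E L Ind S'
| d_ind A k t G D :
    Ind k t -> fst k = SO -> wf_term [] t SO ->
    ~ In k (fv_seq (subst_form (sub1 k TZero) A :: G, D)) ->
    deriv E L Ind (A :: G, subst_form (sub1 k (TSucc (TFree k))) A :: D) ->
    deriv E L Ind (subst_form (sub1 k TZero) A :: G,
                   subst_form (sub1 k t) A :: D).

Definition NoLinks : sequent -> Prop := fun _ => False.
Definition NoInd : var -> term -> Prop := fun _ _ => False.

Definition LKS_proof (E : pr_system) (L : sequent -> Prop) (S : sequent) : Prop :=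
  deriv E L NoInd S.

Definition k_simple_LKI_proof (E : pr_system) (k : var) (S : sequent) : Prop :=
  deriv E NoLinks (fun k' t => k' = k /\ forall v, In v (fv_term t) -> v = k) S.

Record psymbol := { ps_seq : sequent; ps_n : var; ps_xs : list var }.

Fixpoint mk_sub (vs : list var) (ts : list term) : var -> term :=
  match vs, ts with
  | v :: vs', t :: ts' => fun w => if var_eqb w v then t else mk_sub vs' ts' w
  | _, _ => TFree
  end.

Definition subst_seq (sg : var -> term) (S : sequent) : sequent :=
  (map (subst_form sg) (fst S), map (subst_form sg) (snd S)).

Definition ps_inst (e : psymbol) (a : term) (as_ : list term) : sequent :=
  subst_seq (mk_sub (ps_n e :: ps_xs e) (a :: as_)) (ps_seq e).

Definition ps_args_ok (e : psymbol) (a : term) (as_ : list term) : Prop :=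
  Forall2 (fun t v => wf_term [] t (fst v)) (a :: as_) (ps_n e :: ps_xs e).

Definition ps_ok (e : psymbol) : Prop :=
  fst (ps_n e) = SO /\ NoDup (ps_n e :: ps_xs e).

(** k-proof links to psi_j for j > i (0-based positions in [es]). *)
Definition k_links (k : var) (es : list psymbol) (i : nat) (S : sequent) : Prop :=
  exists j e a as_, i < j /\ nth_error es j = Some e /\ ps_args_ok e a as_ /\
    (forall v, In v (fv_term a) -> v = k) /\ S = ps_inst e a as_.

Definition self_links (k : var) (es : list psymbol) (i : nat) (S : sequent) : Prop :=
  exists e as_, nth_error es i = Some e /\ ps_args_ok e (TFree k) as_ /\
    S = ps_inst e (TFree k) as_.

Definition proof_schema (E : pr_system) (k : var) (es : list psymbol) : Prop :=
  es <> [] /\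
  forall i e, nth_error es i = Some e ->
    ps_ok e /\
    LKS_proof E (k_links k es i) (ps_inst e TZero (map TFree (ps_xs e))) /\
    LKS_proof E (fun S => self_links k es i S \/ k_links k es i S)
              (ps_inst e (TSucc (TFree k)) (map TFree (ps_xs e))).

Definition end_sequent (es : list psymbol) (S : sequent) : Prop :=
  exists e, hd_error es = Some e /\ ps_seq e = S.

End Syntax.

Arguments pr_system : clear implicits.
Arguments sequent : clear implicits.
Arguments psymbol : clear implicits.

(* Main.v *)
Require Import Defs.
From Stdlib Require Import List Permutation Arith Bool Lia.
Import ListNotations.
Section S.
Context {Sg : signature}.

Lemma var_eqb_true (v w : var) : var_eqb v w = true -> v = w.
Proof. destruct v as [[] a], w as [[] b]; unfold var_eqb; simpl; try discriminate;
  intro H; apply Nat.eqb_eq in H; subst; reflexivity. Qed.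
Lemma var_eqb_refl (v : var) : var_eqb v v = true.
Proof. destruct v as [[] a]; unfold var_eqb; simpl; apply Nat.eqb_refl. Qed.

Fixpoint term_ind' (P : @term Sg -> Prop)
  (H1 : forall v, P (TFree v)) (H2 : forall i, P (TBound i)) (H3 : P TZero)
  (H4 : forall t, P t -> P (TSucc t))
  (H5 : forall f l, Forall P l -> P (TApp f l)) (t : term) : P t :=
  match t with
  | TFree v => H1 v | TBound i => H2 i | TZero => H3
  | TSucc u => H4 u (term_ind' P H1 H2 H3 H4 H5 u)
  | TApp f l => H5 f l ((fix go l : Forall P l := match l with
       | [] => Forall_nil _ | a :: l' => Forall_cons _ (term_ind' P H1 H2 H3 H4 H5 a) (go l') end) l)
  end.

Lemma subst_term_id (sg : var -> term) (t : @term Sg) :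
  (forall v, In v (fv_term t) -> sg v = TFree v) -> subst_term sg t = t.
Proof.
  induction t using term_ind'; simpl; intros Hs; auto.
  - f_equal; auto.
  - f_equal. induction H; simpl in *; auto.
    f_equal.
    + apply H; intros v Hv; apply Hs; apply in_or_app; auto.
    + apply IHForall; intros v Hv; apply Hs; apply in_or_app; auto.
Qed.

Lemma subst_form_id (sg : var -> term) (A : @formula Sg) :
  (forall v, In v (fv_form A) -> sg v = TFree v) -> subst_form sg A = A.
Proof.
  induction A; simpl; intros H; f_equal; auto using in_or_app.
  induction l; simpl in *; auto. f_equal.
  - apply subst_term_id; intros; apply H; apply in_or_app; auto.
  - apply IHl; intros; apply H; apply in_or_app; auto.
Qed.

Lemma sub1_fresh (k : var) (u : @term Sg) A : ~ In k (fv_form A) -> subst_form (sub1 k u) A = A.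
Proof. intro H; apply subst_form_id; intros v Hv; unfold sub1.
  destruct (var_eqb v k) eqn:E; auto. apply var_eqb_true in E; subst; contradiction. Qed.

Lemma sub1_self (k : var) (A : @formula Sg) : subst_form (sub1 k (TFree k)) A = A.
Proof. apply subst_form_id; intros v Hv; unfold sub1.
  destruct (var_eqb v k) eqn:E; auto. apply var_eqb_true in E; subst; auto. Qed.

Lemma map_sub1_fresh (k : var) (u : @term Sg) L :
  (forall B, In B L -> ~ In k (fv_form B)) -> map (subst_form (sub1 k u)) L = L.
Proof. induction L; simpl; intros H; auto. f_equal; auto. apply sub1_fresh; auto. Qed.


Fixpoint fsize (A : @formula Sg) : nat :=
  match A with
  | FAtom _ _ => 0
  | FNeg B => S (fsize B)
  | FAnd B C | FOr B C | FImp B C => S (fsize B + fsize C)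
  | FAll _ B | FEx _ B => S (fsize B)
  end.

Lemma open_size d u (A : @formula Sg) : fsize (open_form d u A) = fsize A.
Proof. revert d; induction A; intros; simpl; auto. Qed.

Definition fresh (L : list var) : nat := S (fold_right Nat.max 0 (map snd L)).
Lemma fresh_ok L s : ~ In (s, fresh L) L.
Proof.
  assert (forall v, In v L -> snd v < fresh L).
  { unfold fresh; induction L; simpl; intros v Hv; [destruct Hv|].
    destruct Hv as [Hv|Hv]; subst; try lia.
    specialize (IHL v Hv). lia. }
  intro Hi; apply H in Hi; simpl in Hi; lia.
Qed.

Lemma ident E L Ind : forall n (A : @formula Sg), fsize A <= n -> deriv E L Ind ([A], [A]).
Proof.
  induction n; intros A Hs; destruct A; simpl in Hs; try lia;
    try (apply d_ax; unfold is_atom; eauto; fail).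
  - apply d_negr. eapply d_perm. apply (@d_negl _ E L Ind A [A] []). apply IHn; lia.
    apply perm_swap. auto.
  - apply d_andr. apply d_andl1, IHn; lia. apply d_andl2, IHn; lia.
  - apply d_orl. apply d_orr1, IHn; lia. apply d_orr2, IHn; lia.
  - apply d_impr. eapply d_perm. apply (@d_impl _ E L Ind A1 A2 [A1] [] [] [A2]); apply IHn; lia.
    apply perm_swap. auto.
  - set (a := (s, fresh (fv_form A))).
    assert (Ha : ~ In a (fv_form A)) by apply fresh_ok.
    apply (@d_allr _ E L Ind s A a); auto.
    unfold fv_seq; simpl; rewrite !app_nil_r; intro Hi; apply in_app_or in Hi; tauto.
    apply (@d_alll _ E L Ind s A (TFree a) [] _); simpl; auto.
    apply IHn. unfold inst; rewrite open_size; lia.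
  - set (a := (s, fresh (fv_form A))).
    assert (Ha : ~ In a (fv_form A)) by apply fresh_ok.
    apply (@d_exl _ E L Ind s A a); auto.
    unfold fv_seq; simpl; rewrite !app_nil_r; intro Hi; apply in_app_or in Hi; tauto.
    apply (@d_exr _ E L Ind s A (TFree a) _ []); simpl; auto.
    apply IHn. unfold inst; rewrite open_size; lia.
Qed.

Lemma weak_l E L Ind : forall H (G D : list (@formula Sg)), deriv E L Ind (G, D) -> deriv E L Ind (H ++ G, D).
Proof. induction H; simpl; intros; auto. apply d_wl; auto. Qed.
Lemma weak_r E L Ind : forall H (G D : list (@formula Sg)), deriv E L Ind (G, D) -> deriv E L Ind (G, H ++ D).
Proof. induction H; simpl; intros; auto. apply d_wr; auto. Qed.

Lemma ident_w E L Ind (A : @formula Sg) G D : deriv E L Ind (A :: G, A :: D).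
Proof.
  eapply d_perm. apply weak_r, weak_l, (ident _ _ _ (fsize A)); auto.
  apply Permutation_sym, Permutation_cons_append.
  apply Permutation_sym, Permutation_cons_append.
Qed.

Lemma contr_l E L Ind : forall H (G D : list (@formula Sg)), deriv E L Ind (H ++ H ++ G, D) -> deriv E L Ind (H ++ G, D).
Proof.
  induction H as [|a H IH]; simpl; intros G D P; auto.
  assert (P1 : deriv E L Ind (a :: H ++ H ++ G, D)).
  { apply d_cl. eapply d_perm. exact P. 2: auto.
    constructor. apply Permutation_sym, Permutation_middle. }
  assert (P2 : deriv E L Ind (H ++ H ++ a :: G, D)).
  { eapply d_perm. exact P1. 2: auto. rewrite !app_assoc. apply Permutation_middle. }
  apply IH in P2. eapply d_perm. exact P2. apply Permutation_sym, Permutation_middle. auto.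
Qed.

Lemma contr_r E L Ind : forall H (G D : list (@formula Sg)), deriv E L Ind (G, H ++ H ++ D) -> deriv E L Ind (G, H ++ D).
Proof.
  induction H as [|a H IH]; simpl; intros G D P; auto.
  assert (P1 : deriv E L Ind (G, a :: H ++ H ++ D)).
  { apply d_cr. eapply d_perm. exact P. auto.
    constructor. apply Permutation_sym, Permutation_middle. }
  assert (P2 : deriv E L Ind (G, H ++ H ++ a :: D)).
  { eapply d_perm. exact P1. auto. rewrite !app_assoc. apply Permutation_middle. }
  apply IH in P2. eapply d_perm. exact P2. auto. apply Permutation_sym, Permutation_middle.
Qed.

Lemma mono E (L L' : @sequent Sg -> Prop) Ind : (forall S, L S -> L' S) ->
  forall S, deriv E L Ind S -> deriv E L' Ind S.
Proof.
  intros HL S P; induction P;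
  [ eapply d_ax | eapply d_link | eapply d_perm | eapply d_wl | eapply d_wr | eapply d_cl
  | eapply d_cr | eapply d_cut | eapply d_negl | eapply d_negr | eapply d_andl1 | eapply d_andl2
  | eapply d_andr | eapply d_orl | eapply d_orr1 | eapply d_orr2 | eapply d_impl | eapply d_impr
  | eapply d_alll | eapply d_allr | eapply d_exl | eapply d_exr | eapply d_eq | eapply d_ind ];
  eauto.
Qed.


Definition Lk (k : var) (es : list (psymbol Sg)) (S : sequent Sg) : Prop :=
  exists j e a as_, nth_error es j = Some e /\ ps_args_ok e a as_ /\
    (forall v, In v (fv_term a) -> v = k) /\ S = ps_inst e a as_.

Definition Good (E : pr_system Sg) (k : var) (es : list (psymbol Sg)) : Prop :=
  forall i e, nth_error es i = Some e ->
    ps_ok e /\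
    LKS_proof E (k_links k es i) (ps_inst e TZero (map TFree (ps_xs e))) /\
    LKS_proof E (fun S => self_links k es i S \/ k_links k es i S)
              (ps_inst e (TSucc (TFree k)) (map TFree (ps_xs e))).

Lemma Lk_app_l k es1 es2 S : Lk k es1 S -> Lk k (es1 ++ es2) S.
Proof. intros (j & e & a & as_ & H1 & H2 & H3 & H4).
  exists j, e, a, as_; repeat split; auto. rewrite nth_error_app1; [auto|apply nth_error_Some; congruence]. Qed.
Lemma Lk_app_r k es1 es2 S : Lk k es2 S -> Lk k (es1 ++ es2) S.
Proof. intros (j & e & a & as_ & H1 & H2 & H3 & H4).
  exists (length es1 + j), e, a, as_; repeat split; auto.
  rewrite nth_error_app2 by lia. now replace (length es1 + j - length es1) with j by lia. Qed.

Lemma Good_app E k es1 es2 : Good E k es1 -> Good E k es2 -> Good E k (es1 ++ es2).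
Proof.
  intros G1 G2 i e Hi.
  destruct (Nat.lt_ge_cases i (length es1)) as [Hl|Hl].
  - rewrite nth_error_app1 in Hi by auto.
    destruct (G1 i e Hi) as (H1 & H2 & H3); split; [auto|split].
    + eapply mono; [|exact H2]. intros Sq (j & e' & a & as_ & A1 & A2 & A3 & A4 & A5).
      exists j, e', a, as_; repeat split; auto. rewrite nth_error_app1; [auto|apply nth_error_Some; congruence].
    + eapply mono; [|exact H3]. intros Sq [(e' & as_ & A1 & A2 & A3)|(j & e' & a & as_ & A1 & A2 & A3 & A4 & A5)].
      * left; exists e', as_; repeat split; auto. now rewrite nth_error_app1.
      * right; exists j, e', a, as_; repeat split; auto. rewrite nth_error_app1; [auto|apply nth_error_Some; congruence].
  - rewrite nth_error_app2 in Hi by auto.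
    destruct (G2 _ e Hi) as (H1 & H2 & H3); split; [auto|split].
    + eapply mono; [|exact H2]. intros Sq (j & e' & a & as_ & A1 & A2 & A3 & A4 & A5).
      exists (length es1 + j), e', a, as_; repeat split; auto. lia.
      rewrite nth_error_app2 by lia. now replace (length es1 + j - length es1) with j by lia.
    + eapply mono; [|exact H3]. intros Sq [(e' & as_ & A1 & A2 & A3)|(j & e' & a & as_ & A1 & A2 & A3 & A4 & A5)].
      * left; exists e', as_; repeat split; auto. rewrite nth_error_app2 by lia. auto.
      * right; exists (length es1 + j), e', a, as_; repeat split; auto. lia.
        rewrite nth_error_app2 by lia. now replace (length es1 + j - length es1) with j by lia.
Qed.

Lemma Good_cons E k e0 es : Good E k es -> ps_ok e0 ->
  LKS_proof E (Lk k es) (ps_inst e0 TZero (map TFree (ps_xs e0))) ->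
  LKS_proof E (fun S => self_links k (e0 :: es) 0 S \/ Lk k es S)
              (ps_inst e0 (TSucc (TFree k)) (map TFree (ps_xs e0))) ->
  Good E k (e0 :: es).
Proof.
  intros G Hok P0 P1 [|i] e Hi; simpl in Hi.
  - inversion Hi; subst. split; [auto|split].
    + eapply mono; [|exact P0]. intros Sq (j & e' & a & as_ & A1 & A2 & A3 & A4).
      exists (S j), e', a, as_; repeat split; auto. lia.
    + eapply mono; [|exact P1]. intros Sq [A|(j & e' & a & as_ & A1 & A2 & A3 & A4)]; auto.
      right; exists (S j), e', a, as_; repeat split; auto. lia.
  - destruct (G i e Hi) as (H1 & H2 & H3); split; [auto|split].
    + eapply mono; [|exact H2]. intros Sq (j & e' & a & as_ & A1 & A2 & A3 & A4 & A5).
      exists (S j), e', a, as_; repeat split; auto. lia.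
    + eapply mono; [|exact H3]. intros Sq [(e' & as_ & A1 & A2 & A3)|(j & e' & a & as_ & A1 & A2 & A3 & A4 & A5)].
      * left; exists e', as_; repeat split; auto.
      * right; exists (S j), e', a, as_; repeat split; auto. lia.
Qed.


Definition mk_e0 (k : var) (A0 A : formula) (G D : list (@formula Sg)) : psymbol Sg :=
  {| ps_seq := (A0 :: G, A :: D); ps_n := k; ps_xs := [] |}.

Lemma subst_term_ext (sg sg' : var -> term) (t : @term Sg) :
  (forall v, sg v = sg' v) -> subst_term sg t = subst_term sg' t.
Proof.
  intro He; induction t using term_ind'; simpl; f_equal; auto.
  induction H; simpl; f_equal; auto.
Qed.
Lemma subst_form_ext (sg sg' : var -> term) (A : @formula Sg) :
  (forall v, sg v = sg' v) -> subst_form sg A = subst_form sg' A.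
Proof.
  intro He; induction A; simpl; f_equal; auto.
  apply map_ext; intros; apply subst_term_ext; auto.
Qed.

Lemma e0_inst k A0 A G D u : ~ In k (fv_seq (A0 :: G, D)) ->
  ps_inst (mk_e0 k A0 A G D) u [] = (A0 :: G, subst_form (sub1 k u) A :: D).
Proof.
  intro Hk. unfold ps_inst, subst_seq, mk_e0.
  assert (HB : forall B, In B (A0 :: G ++ D) -> ~ In k (fv_form B)).
  { intros B HB Hi; apply Hk; unfold fv_seq. apply in_flat_map; eauto. }
  cbn [fst snd map ps_n ps_xs ps_seq]. f_equal; f_equal.
  - rewrite (subst_form_ext _ (sub1 k u)) by reflexivity.
    apply sub1_fresh; apply HB; simpl; auto.
  - rewrite (map_ext _ (subst_form (sub1 k u))) by (intros; apply subst_form_ext; reflexivity).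
    apply map_sub1_fresh; intros B Hb; apply HB; simpl; right; apply in_or_app; auto.
  - rewrite (map_ext _ (subst_form (sub1 k u))) by (intros; apply subst_form_ext; reflexivity).
    apply map_sub1_fresh; intros B Hb; apply HB; simpl; right; apply in_or_app; auto.
Qed.

Definition KInd (k : var) : var -> @term Sg -> Prop :=
  fun k' t => k' = k /\ forall v, In v (fv_term t) -> v = k.

Lemma conv E k : fst k = SO -> forall Sq, deriv E NoLinks (KInd k) Sq ->
  exists es, Good E k es /\ deriv E (Lk k es) NoInd Sq.
Proof.
  intros Hk Sq P; induction P;
  repeat match goal with
  | H : exists es, _ |- _ => destruct H as (? & ? & ?) end.
  24: {
    match goal with Hg0 : Good _ _ ?x, Pp0 : deriv _ (Lk _ ?x) _ _ |- _ => rename x into es, Hg0 into Hg, Pp0 into Pp end.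
    destruct H as [-> Ht].
    set (A0 := subst_form (sub1 k TZero) A) in *.
    set (e0 := mk_e0 k A0 A G D).
    assert (Hn : forall u, ps_inst e0 u [] = (A0 :: G, subst_form (sub1 k u) A :: D))
      by (intros; apply e0_inst; auto).
    exists (e0 :: es); split.
    - apply Good_cons; auto.
      + split; simpl; auto. constructor; [intros []|constructor].
      + change (map TFree (ps_xs e0)) with (@nil (@term Sg)). rewrite Hn.
        apply ident_w.
      + change (map TFree (ps_xs e0)) with (@nil (@term Sg)). rewrite Hn.
        set (A1 := subst_form (sub1 k (TSucc (TFree k))) A) in *.
        assert (L1 : deriv E (fun S => self_links k (e0 :: es) 0 S \/ Lk k es S) NoInd (A0 :: G, A :: D)).
        { apply d_link; left. exists e0, []; split; [reflexivity|split].
          - constructor; [simpl; auto|constructor].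
          - rewrite Hn, sub1_self; reflexivity. }
        assert (L2 : deriv E (fun S => self_links k (e0 :: es) 0 S \/ Lk k es S) NoInd (A :: G, A1 :: D)).
        { eapply mono; [|exact Pp]; auto. }
        pose proof (d_cut L1 L2) as C.
        assert (C2 : deriv E (fun S => self_links k (e0 :: es) 0 S \/ Lk k es S) NoInd (G ++ G ++ [A0], D ++ D ++ [A1])).
        { eapply d_perm; [exact C| |].
          - rewrite app_assoc. apply Permutation_cons_append.
          - apply Permutation_app_head, Permutation_cons_append. }
        apply contr_l, contr_r in C2.
        eapply d_perm; [exact C2| |]; apply Permutation_sym, Permutation_cons_append.
    - apply d_link. exists 0, e0, t, []; split; [reflexivity|split; [|split; [exact Ht|]]].
      + constructor; [simpl; rewrite Hk; auto|constructor].
      + rewrite Hn; reflexivity. }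
  all: try match goal with
  | G1 : Good _ _ ?es1, G2 : Good _ _ ?es2 |- _ =>
      exists (es1 ++ es2); split; [apply Good_app; auto|]
  | G1 : Good _ _ ?es1 |- _ => exists es1; split; [auto|] end.
  all: try match goal with
  | P1 : deriv _ (Lk _ ?es1) _ _, P2 : deriv _ (Lk _ ?es2) _ _ |- deriv _ (Lk _ (?es1 ++ ?es2)) _ _ =>
      apply (mono E (Lk k es1) (Lk k (es1 ++ es2))) in P1; [|apply Lk_app_l];
      apply (mono E (Lk k es2) (Lk k (es1 ++ es2))) in P2; [|apply Lk_app_r] end.
  - exists []; split. intros [|] e He; discriminate. apply d_ax; auto.
  - contradiction.
  - eapply d_perm; eauto.
  - eapply d_wl; eauto.
  - eapply d_wr; eauto.
  - eapply d_cl; eauto.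
  - eapply d_cr; eauto.
  - eapply d_cut; eauto.
  - eapply d_negl; eauto.
  - eapply d_negr; eauto.
  - eapply d_andl1; eauto.
  - eapply d_andl2; eauto.
  - eapply d_andr; eauto.
  - eapply d_orl; eauto.
  - eapply d_orr1; eauto.
  - eapply d_orr2; eauto.
  - eapply d_impl; eauto.
  - eapply d_impr; eauto.
  - eapply d_alll; eauto.
  - eapply d_allr; eauto.
  - eapply d_exl; eauto.
  - eapply d_exr; eauto.
  - eapply d_eq; eauto.
Qed.


Lemma e1_inst (S0 : sequent Sg) n u : ~ In n (fv_seq S0) ->
  ps_inst {| ps_seq := S0; ps_n := n; ps_xs := [] |} u [] = S0.
Proof.
  intro Hn. destruct S0 as [G D]. unfold ps_inst, subst_seq.
  cbn [fst snd ps_n ps_xs ps_seq].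
  rewrite !(map_ext _ (subst_form (sub1 n u))) by (intros; apply subst_form_ext; reflexivity).
  f_equal; apply map_sub1_fresh; intros B HB Hi; apply Hn; unfold fv_seq; apply in_flat_map;
    exists B; split; auto; simpl; apply in_or_app; auto.
Qed.

End S.

Theorem mainTheorem6 (Sg : signature) (E : pr_system Sg) (k : var)
  (S : sequent Sg) :
  pr_system_ok E -> fst k = SO ->
  k_simple_LKI_proof E k S ->
  exists es : list (psymbol Sg), proof_schema E k es /\ end_sequent es S.
Proof.
  intros _ Hk P.
  destruct (conv E k Hk S P) as (es & Hg & Pp).
  set (n := (SO, fresh (fv_seq S))).
  assert (Hn : ~ In n (fv_seq S)) by apply fresh_ok.
  set (e1 := {| ps_seq := S; ps_n := n; ps_xs := [] |}).
  exists (e1 :: es); split.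
  - split; [discriminate|].
    apply Good_cons; auto.
    + split; simpl; auto. constructor; [intros []|constructor].
    + change (map TFree (ps_xs e1)) with (@nil (@term Sg)). unfold e1; rewrite e1_inst by auto.
      exact Pp.
    + change (map TFree (ps_xs e1)) with (@nil (@term Sg)). unfold e1; rewrite e1_inst by auto.
      apply d_link; left. exists e1, []; split; [reflexivity|split].
      * constructor; [simpl; auto|constructor].
      * unfold e1; rewrite e1_inst by auto; reflexivity.
  - exists e1; split; reflexivity.
Qed.
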